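(* Let $f_1,\dots,f_n\colon(c_1,c_2)\to\mathbb R$ and $\eta\colon(c_1,c_2)\times\mathbb R\to(0,\infty)$ be smooth. The manifold $(c_1,c_2)\times\mathbb R^{n+1}$ with the metric $(\star)$ is complete if $(c_1,c_2)=\mathbb R$ and there exists a positive continuous function $r\colon\mathbb R\to(0,\infty)$ with $\eta(x,u)\ge r(u)$ for all $x,u$.
   Context: The metric $(\star)$: on $(c_1,c_2)\times\mathbb R^{n+1}$ with coordinates $(x,u,v_1,\dots,v_n)$, with conventions $v_0=u$, $v_{-1}=v_{n+1}=0$, $f_0=f_{n+1}=0$, $g_{\eta,f}=\eta(x,u)^2dx^2+\sum_{j=0}^n\big(dv_j+(v_{j-1}f_j(x)-v_{j+1}f_{j+1}(x))dx\big)^2$. *)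

(* Defs.v *)
From Stdlib Require Import Reals Lra Lia List.
Import ListNotations.
From Coquelicot Require Import Coquelicot.
Open Scope R_scope.

Definition smooth1 (g : R -> R) : Prop := forall (k : nat) (x : R), ex_derive_n g k x.

(* Iterated partial derivatives of h : R -> R -> R along a list of directions
   (true = d/dx in the first variable, false = d/du in the second variable);
   the head of the list is the last derivative applied. *)
Fixpoint pdiff (l : list bool) (h : R -> R -> R) : R -> R -> R :=
  match l with
  | nil => h
  | cons b l' =>
      let g := pdiff l' h in
      if b then (fun x u => Derive (fun y => g y u) x)
           else (fun x u => Derive (fun y => g x y) u)
  end.

Definition smooth2 (h : R -> R -> R) : Prop :=
  forall (l : list bool) (x u : R),
    continuous (fun p : R * R => pdiff l h (fst p) (snd p)) (x, u) /\
    ex_derive (fun y => pdiff l h y u) x /\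
    ex_derive (fun y => pdiff l h x y) u.

(* Points of R x R^{n+1} are encoded as p : nat -> R with
   p 0 = x, p (S j) = v_j (j = 0..n, v_0 = u), and p k = 0 for k > n+1. *)
Definition in_manifold (n : nat) (p : nat -> R) : Prop :=
  forall k : nat, (n + 1 < k)%nat -> p k = 0.

Definition fcoef (n : nat) (f : nat -> R -> R) (j : nat) (x : R) : R :=
  if andb (1 <=? j)%nat (j <=? n)%nat then f j x else 0.

(* v_{j-1} with v_{-1} = 0 (recall v_i = p (S i)). *)
Definition vprev (p : nat -> R) (j : nat) : R :=
  match j with O => 0 | S i => p (S i) end.

(* v_{j+1} with v_{n+1} = 0. *)
Definition vnext (n : nat) (p : nat -> R) (j : nat) : R :=
  if (j + 1 <=? n)%nat then p (j + 2)%nat else 0.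

(* The metric (star) at point p evaluated on tangent vector w (same encoding):
   eta(x,u)^2 dx^2 + sum_{j=0}^n (dv_j + (v_{j-1} f_j(x) - v_{j+1} f_{j+1}(x)) dx)^2. *)
Definition gstar (n : nat) (f : nat -> R -> R) (eta : R -> R -> R)
    (p w : nat -> R) : R :=
  (eta (p 0%nat) (p 1%nat))^2 * (w 0%nat)^2 +
  sum_f_R0 (fun j =>
     (w (S j) + (vprev p j * fcoef n f j (p 0%nat)
                 - vnext n p j * fcoef n f (S j) (p 0%nat)) * w 0%nat)^2) n.

(* Admissible curves from p to q: C^1 curves (given componentwise, parameter t in R,
   used on [0,1]) lying in the manifold. *)
Definition adm_curve (n : nat) (c : nat -> R -> R) (p q : nat -> R) : Prop :=
  (forall t, in_manifold n (fun k => c k t)) /\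
  (forall k t, ex_derive (c k) t /\ continuous (Derive (c k)) t) /\
  (forall k, c k 0 = p k) /\ (forall k, c k 1 = q k).

Definition curve_length (n : nat) (f : nat -> R -> R) (eta : R -> R -> R)
    (c : nat -> R -> R) : R :=
  RInt (fun t => sqrt (gstar n f eta (fun k => c k t) (fun k => Derive (c k) t))) 0 1.

Definition rdist (n : nat) (f : nat -> R -> R) (eta : R -> R -> R)
    (p q : nat -> R) : Rbar :=
  Glb_Rbar (fun L => exists c, adm_curve n c p q /\ L = curve_length n f eta c).

Definition riem_complete (n : nat) (f : nat -> R -> R) (eta : R -> R -> R) : Prop :=
  forall s : nat -> (nat -> R),
    (forall m, in_manifold n (s m)) ->
    (forall eps : R, 0 < eps -> exists N : nat, forall m k : nat,
        (N <= m)%nat -> (N <= k)%nat -> Rbar_lt (rdist n f eta (s m) (s k)) (Finite eps)) ->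
    exists q : nat -> R, in_manifold n q /\
      (forall eps : R, 0 < eps -> exists N : nat, forall m : nat,
        (N <= m)%nat -> Rbar_lt (rdist n f eta (s m) q) (Finite eps)).

(* Main.v *)
Require Import Defs.
From Stdlib Require Import Reals Lra Lia Classical FunctionalExtensionality.
From Coquelicot Require Import Coquelicot.
Open Scope R_scope.

Lemma cR_plus (f g : R -> R) x : continuous f x -> continuous g x -> continuous (fun t => f t + g t) x.
Proof. intros; apply (continuous_plus f g); auto. Qed.
Lemma cR_mult (f g : R -> R) x : continuous f x -> continuous g x -> continuous (fun t => f t * g t) x.
Proof. intros; apply (continuous_mult f g); auto. Qed.
Lemma cR_minus (f g : R -> R) x : continuous f x -> continuous g x -> continuous (fun t => f t - g t) x.
Proof. intros; apply (continuous_minus f g); auto. Qed.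
Lemma cR_pow2 (f : R -> R) x : continuous f x -> continuous (fun t => (f t)^2) x.
Proof.
  intros. apply (continuous_ext (fun t => f t * (f t * 1))). intros; reflexivity.
  apply cR_mult; auto. apply cR_mult; auto. apply continuous_const.
Qed.
Lemma cR_sqrt (f : R -> R) x : continuous f x -> continuous (fun t => sqrt (f t)) x.
Proof. intros. apply (continuous_comp f sqrt); auto. apply continuous_sqrt. Qed.
Lemma cR_sum (F : nat -> R -> R) N x : (forall j, (j <= N)%nat -> continuous (F j) x) ->
  continuous (fun t => sum_f_R0 (fun j => F j t) N) x.
Proof.
  induction N; intros H; simpl. apply H; lia.
  apply cR_plus. apply IHN; intros; apply H; lia. apply H; lia.
Qed.

Lemma fcoef_cont n f : (forall j : nat, (1 <= j <= n)%nat -> smooth1 (f j)) ->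
  forall j x, continuous (fcoef n f j) x.
Proof.
  intros Hf j x. unfold fcoef. destruct (andb (1 <=? j)%nat (j <=? n)%nat) eqn:E.
  - apply andb_prop in E. destruct E as [E1 E2]. apply Nat.leb_le in E1. apply Nat.leb_le in E2.
    apply (@ex_derive_continuous R_AbsRing R_NormedModule (f j)). exact (Hf j (conj E1 E2) 1%nat x).
  - apply continuous_const.
Qed.

Definition Gc n f eta (c : nat -> R -> R) (t : R) :=
  sqrt (gstar n f eta (fun k => c k t) (fun k => Derive (c k) t)).

Lemma cont_gstar n f eta (c d : nat -> R -> R) t0
  (Hf : forall j x, continuous (fcoef n f j) x)
  (He : forall x u, continuous (fun p : R * R => eta (fst p) (snd p)) (x, u))
  (Hc : forall k, continuous (c k) t0) (Hd : forall k, continuous (d k) t0) :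
  continuous (fun t => gstar n f eta (fun k => c k t) (fun k => d k t)) t0.
Proof.
  unfold gstar. apply cR_plus.
  - apply cR_mult; apply cR_pow2; auto.
    apply (continuous_comp_2 (c 0%nat) (c 1%nat) eta); auto.
  - apply cR_sum. intros j _. apply cR_pow2. apply cR_plus. auto.
    apply cR_mult; auto. apply cR_minus; apply cR_mult.
    + destruct j; simpl. apply continuous_const. auto.
    + apply (continuous_comp (c 0%nat) (fcoef n f j)); auto.
    + unfold vnext. destruct (j + 1 <=? n)%nat. auto. apply continuous_const.
    + apply (continuous_comp (c 0%nat) (fcoef n f (S j))); auto.
Qed.

Lemma Gc_cont n f eta c
  (Hf : forall j x, continuous (fcoef n f j) x)
  (He : forall x u, continuous (fun p : R * R => eta (fst p) (snd p)) (x, u))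
  (Hc : forall k t, ex_derive (c k) t /\ continuous (Derive (c k)) t) :
  forall t, continuous (Gc n f eta c) t.
Proof.
  intros t. unfold Gc. apply cR_sqrt. apply cont_gstar; auto.
  intro k. apply (@ex_derive_continuous R_AbsRing R_NormedModule (c k)). apply Hc. intro k; apply Hc.
Qed.

Lemma Gc_nonneg n f eta c t : 0 <= Gc n f eta c t.
Proof. apply sqrt_pos. Qed.

Lemma deriv_bound (h h' g : R -> R) (K : R) :
  (forall t, is_derive h t (h' t)) -> (forall t, continuous g t) ->
  (forall t, 0 <= t <= 1 -> h' t <= K * g t) ->
  forall s, 0 <= s <= 1 -> h s - h 0 <= K * RInt g 0 s.
Proof.
  intros Hh Hg Hb s Hs.
  set (H := fun t => h t - K * RInt g 0 t).
  assert (HI : forall t, is_derive (fun t => RInt g 0 t) t (g t)).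
  { intro t. apply (is_derive_RInt g (fun t => RInt g 0 t) 0 t). apply filter_forall. intro b. apply (@RInt_correct R_CompleteNormedModule).
    apply (@ex_RInt_continuous R_CompleteNormedModule g 0 b). intros; auto. auto. }
  assert (dH : forall t, is_derive H t (h' t - K * g t)).
  { intro t. unfold H. apply (is_derive_minus h (fun t => K * RInt g 0 t)). auto.
    apply (is_derive_scal (fun t => RInt g 0 t)). auto. }
  destruct (MVT_gen H 0 s (fun t => h' t - K * g t)) as [c [Hc Hc2]].
  - intros x Hx. apply dH.
  - intros x Hx. apply continuity_pt_filterlim. apply (@ex_derive_continuous R_AbsRing R_NormedModule H).
    eexists; apply dH.
  - rewrite Rmin_left in Hc by lra. rewrite Rmax_right in Hc by lra.
    unfold H in Hc2. rewrite RInt_point in Hc2.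
    assert (h' c - K * g c <= 0) by (specialize (Hb c); lra).
    assert ((h' c - K * g c) * (s - 0) <= 0) by nra.
    change (zero : R) with 0 in Hc2. lra.
Qed.

Lemma tele (b : nat -> R) N : sum_f_R0 (fun j => b j - b (S j)) N = b 0%nat - b (S N).
Proof. induction N; simpl. reflexivity. rewrite IHN. ring. Qed.

Lemma vprev_f n f p x j : vprev p j * fcoef n f j x = p j * fcoef n f j x.
Proof. destruct j. unfold fcoef; simpl; ring. reflexivity. Qed.

Lemma vnext_f n f p x j : vnext n p j * fcoef n f (S j) x = p (S (S j)) * fcoef n f (S j) x.
Proof.
  unfold vnext, fcoef. destruct (j + 1 <=? n)%nat eqn:E1.
  - replace (j + 2)%nat with (S (S j)) by lia. reflexivity.
  - destruct (andb (1 <=? S j)%nat (S j <=? n)%nat) eqn:E2.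
    + apply andb_prop in E2. destruct E2 as [_ E2]. apply Nat.leb_le in E2.
      apply Nat.leb_gt in E1. lia.
    + ring.
Qed.

Lemma fcoef0 n f x : fcoef n f 0 x = 0.
Proof. reflexivity. Qed.
Lemma fcoefSn n f x : fcoef n f (S n) x = 0.
Proof. unfold fcoef. rewrite (proj2 (Nat.leb_gt (S n) n)) by lia. rewrite Bool.andb_false_r. reflexivity. Qed.
Lemma fcoef_big n f j x : (n < j)%nat -> fcoef n f j x = 0.
Proof. intro. unfold fcoef. rewrite (proj2 (Nat.leb_gt j n)) by lia. rewrite Bool.andb_false_r. reflexivity. Qed.

Definition acoef n f (p : nat -> R) j :=
  vprev p j * fcoef n f j (p 0%nat) - vnext n p j * fcoef n f (S j) (p 0%nat).

Lemma skew n f p : sum_f_R0 (fun j => p (S j) * acoef n f p j) n = 0.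
Proof.
  set (x := p 0%nat).
  rewrite (sum_eq _ (fun j => (p (S j) * p j * fcoef n f j x) - (p (S (S j)) * p (S j) * fcoef n f (S j) x))).
  - rewrite (tele (fun j => p (S j) * p j * fcoef n f j x)). rewrite fcoef0, fcoefSn. ring.
  - intros i _. unfold acoef. fold x.
    transitivity (p (S i) * (vprev p i * fcoef n f i x) - p (S i) * (vnext n p i * fcoef n f (S i) x)).
    ring. rewrite vprev_f, vnext_f. ring.
Qed.

Lemma is_derive_eq (f : R -> R) x l l' : is_derive f x l -> l = l' -> is_derive f x l'.
Proof. intros H E; subst; auto. Qed.

Lemma is_derive_sum (F : nat -> R -> R) (dF : nat -> R) N t :
  (forall j, is_derive (F j) t (dF j)) ->
  is_derive (fun t => sum_f_R0 (fun j => F j t) N) t (sum_f_R0 dF N).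
Proof.
  intro H. induction N; simpl. apply H.
  apply (is_derive_plus (fun t => sum_f_R0 (fun j => F j t) N) (F (S N))); auto.
Qed.

Definition Pn n (p : nat -> R) := sqrt (1 + sum_f_R0 (fun j => (p (S j))^2) n).

Lemma sumsq_nonneg (p : nat -> R) n : 0 <= sum_f_R0 (fun j => (p j)^2) n.
Proof. apply cond_pos_sum. intro; apply pow2_ge_0. Qed.

Lemma Pn_pos n p : 1 <= Pn n p.
Proof.
  unfold Pn. apply Rle_trans with (sqrt 1). rewrite sqrt_1; lra. apply sqrt_le_1_alt.
  pose proof (sumsq_nonneg (fun j => p (S j)) n) as H. cbv beta in H. idtac. lra.
Qed.

Lemma Pn_sq n p : (Pn n p)^2 = 1 + sum_f_R0 (fun j => (p (S j))^2) n.
Proof.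
  unfold Pn. rewrite pow2_sqrt. auto.
  pose proof (sumsq_nonneg (fun j => p (S j)) n). cbv beta in H. lra.
Qed.

Lemma Pn_ext n p q : (forall k, p k = q k) -> Pn n p = Pn n q.
Proof. intro H. unfold Pn. f_equal. f_equal. apply sum_eq. intros; rewrite H; auto. Qed.

Lemma Pn_deriv n (c : nat -> R -> R) t : (forall k, ex_derive (c k) t) ->
  is_derive (fun t => Pn n (fun k => c k t)) t
    (sum_f_R0 (fun j => c (S j) t * Derive (c (S j)) t) n / Pn n (fun k => c k t)).
Proof.
  intro Hd. unfold Pn.
  eapply is_derive_eq.
  apply (is_derive_sqrt (fun t => 1 + sum_f_R0 (fun j => (c (S j) t)^2) n)).
  apply (is_derive_plus (fun _ => 1) (fun t => sum_f_R0 (fun j => (c (S j) t)^2) n)).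
  apply is_derive_const.
  apply (is_derive_sum (fun j t => (c (S j) t)^2)).
  intro j. apply is_derive_pow. apply Derive_correct. apply Hd.
  pose proof (sumsq_nonneg (fun j => c (S j) t) n). cbv beta in H. lra.
  change (plus (zero : R) ?x) with (0 + x).
  rewrite Rplus_0_l.
  rewrite (sum_eq (fun j => INR 2 * Derive (c (S j)) t * c (S j) t ^ Init.Nat.pred 2) (fun j => (c (S j) t * Derive (c (S j)) t) * 2)).
  rewrite <- scal_sum. match goal with |- ?a = ?b => change (@eq R a b) end. field.
  apply Rgt_not_eq. apply sqrt_lt_R0.
  pose proof (sumsq_nonneg (fun j => c (S j) t) n). cbv beta in H. lra.
  intros i _. simpl. ring.
Qed.

Lemma term_le_sum (F : nat -> R) N j : (forall i, 0 <= F i) -> (j <= N)%nat -> F j <= sum_f_R0 F N.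
Proof.
  intros H Hj. induction N; simpl.
  - replace j with 0%nat by lia. lra.
  - destruct (Nat.eq_dec j (S N)). subst. pose proof (cond_pos_sum F N H). lra.
    pose proof (H (S N)). assert (F j <= sum_f_R0 F N) by (apply IHN; lia). lra.
Qed.

Lemma comp_le_Pn n p : in_manifold n p -> forall i, Rabs (p (S i)) <= Pn n p.
Proof.
  intros Hm i. destruct (Compare_dec.le_lt_dec i n) as [Hi|Hi].
  - unfold Pn. rewrite <- sqrt_Rsqr_abs. apply sqrt_le_1_alt.
    pose proof (term_le_sum (fun j => (p (S j))^2) n i (fun j => pow2_ge_0 _) Hi).
    cbv beta in H. unfold Rsqr. replace (p (S i) * p (S i)) with (p (S i)^2) by ring. lra.
  - rewrite Hm by lia. rewrite Rabs_R0. pose proof (Pn_pos n p). lra.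
Qed.

Lemma cs_lambda (v w : nat -> R) N lam : 0 < lam ->
  2 * sum_f_R0 (fun j => v j * w j) N <=
  lam * sum_f_R0 (fun j => (v j)^2) N + sum_f_R0 (fun j => (w j)^2) N / lam.
Proof.
  intro Hl.
  replace (lam * sum_f_R0 (fun j => (v j)^2) N + sum_f_R0 (fun j => (w j)^2) N / lam)
    with (sum_f_R0 (fun j => (v j)^2 * lam + (w j)^2 * / lam) N).
  rewrite scal_sum. apply sum_Rle. intros i _.
  replace ((w i)^2 * / lam) with (lam * (w i / lam)^2) by (field; lra).
  replace (v i * w i * 2) with (2 * lam * (v i * (w i / lam))) by (field; lra).
  assert (0 <= lam * (v i - w i / lam)^2) by (apply Rmult_le_pos; [lra | apply pow2_ge_0]).
  nra.
  rewrite plus_sum, <- !scal_sum. unfold Rdiv. ring.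
Qed.

Lemma cs_final (X S W G P : R) : 0 <= S -> 0 < P -> P^2 = 1 + S -> W <= G^2 -> 0 <= G ->
  (forall lam, 0 < lam -> 2 * X <= lam * S + W / lam) -> X <= P * G.
Proof.
  intros HS HP HP2 HW HG H.
  destruct (Rlt_or_le 0 G) as [Gp|G0].
  - specialize (H (G / P)). assert (0 < G / P) by (apply Rdiv_lt_0_compat; auto).
    specialize (H H0).
    assert (W / (G / P) <= G * P).
    { replace (W / (G/P)) with (W * P / G) by (field; lra).
      apply (Rmult_le_reg_r G); auto. field_simplify; try lra. nra. }
    assert (G / P * S <= G * P).
    { replace (G / P * S) with (G * (S / P)) by (field; lra).
      apply Rmult_le_compat_l; try lra. apply (Rmult_le_reg_r P); auto.
      field_simplify; try lra. }
    lra.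
  - assert (G = 0) by lra. subst G.
    destruct (Rle_or_lt X 0). lra.
    assert (W <= 0) by (simpl in HW; lra).
    assert (Hl : 0 < X / (S + 1)) by (apply Rdiv_lt_0_compat; lra).
    specialize (H _ Hl).
    assert (W / (X / (S + 1)) <= 0).
    { unfold Rdiv. apply Rmult_le_0_r; auto. left; apply Rinv_0_lt_compat; auto. }
    assert (X / (S + 1) * S < X).
    { replace (X / (S + 1) * S) with (X * (S / (S + 1))) by (field; lra).
      assert (S / (S + 1) < 1). { apply (Rmult_lt_reg_r (S + 1)); try lra. field_simplify; lra. }
      nra. }
    lra.
Qed.

Lemma gstar_eq n f eta p w : gstar n f eta p w =
  (eta (p 0%nat) (p 1%nat))^2 * (w 0%nat)^2 +
  sum_f_R0 (fun j => (w (S j) + acoef n f p j * w 0%nat)^2) n.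
Proof. reflexivity. Qed.

Lemma gstar_ge_sum n f eta p w : sum_f_R0 (fun j => (w (S j) + acoef n f p j * w 0%nat)^2) n <= gstar n f eta p w.
Proof. rewrite gstar_eq. assert (0 <= (eta (p 0%nat) (p 1%nat))^2 * (w 0%nat)^2) by
  (apply Rmult_le_pos; apply pow2_ge_0). lra. Qed.

Lemma gstar_ge_x n f eta p w : (eta (p 0%nat) (p 1%nat))^2 * (w 0%nat)^2 <= gstar n f eta p w.
Proof. rewrite gstar_eq. pose proof (sumsq_nonneg (fun j => w (S j) + acoef n f p j * w 0%nat) n).
  cbv beta in H. lra. Qed.

Lemma gstar_nonneg n f eta p w : 0 <= gstar n f eta p w.
Proof. pose proof (gstar_ge_x n f eta p w). assert (0 <= (eta (p 0%nat) (p 1%nat))^2 * (w 0%nat)^2) by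
  (apply Rmult_le_pos; apply pow2_ge_0). lra. Qed.

Lemma Gc_sq n f eta c t : (Gc n f eta c t)^2 = gstar n f eta (fun k => c k t) (fun k => Derive (c k) t).
Proof. unfold Gc. rewrite pow2_sqrt. auto. apply gstar_nonneg. Qed.

Lemma P_bound_deriv n f eta (c : nat -> R -> R) t :
  sum_f_R0 (fun j => c (S j) t * Derive (c (S j)) t) n / Pn n (fun k => c k t) <= Gc n f eta c t.
Proof.
  set (p := fun k => c k t). set (x' := Derive (c 0%nat) t).
  set (w := fun j => Derive (c (S j)) t + acoef n f p j * x').
  set (X := sum_f_R0 (fun j => c (S j) t * Derive (c (S j)) t) n).
  assert (HX : X = sum_f_R0 (fun j => p (S j) * w j) n).
  { unfold w. rewrite (sum_eq _ (fun j => c (S j) t * Derive (c (S j)) t + p (S j) * acoef n f p j * x')).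
    rewrite plus_sum. rewrite <- (scal_sum (fun j => p (S j) * acoef n f p j)). rewrite skew. unfold X. ring.
    intros i _. unfold p. ring. }
  assert (HP := Pn_pos n p).
  assert (X <= Pn n p * Gc n f eta c t).
  { apply (cs_final X (sum_f_R0 (fun j => (p (S j))^2) n) (sum_f_R0 (fun j => (w j)^2) n)).
    apply (sumsq_nonneg (fun j => p (S j))). lra. apply Pn_sq.
    rewrite Gc_sq. exact (gstar_ge_sum n f eta (fun k => c k t) (fun k => Derive (c k) t)). apply Gc_nonneg.
    intros lam Hl. rewrite HX. apply (cs_lambda (fun j => p (S j)) w n lam Hl). }
  fold p. fold X. apply (Rmult_le_reg_r (Pn n p)). lra. field_simplify; lra.
Qed.

Lemma x_bound n f eta (c : nat -> R -> R) t m : 0 < m -> m <= eta (c 0%nat t) (c 1%nat t) ->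
  Rabs (Derive (c 0%nat) t) <= Gc n f eta c t / m.
Proof.
  intros Hm He. apply (Rmult_le_reg_r m); auto. field_simplify; try lra.
  apply Rle_trans with (Rabs (eta (c 0%nat t) (c 1%nat t) * Derive (c 0%nat) t)).
  rewrite Rabs_mult. rewrite (Rabs_right (eta _ _)) by lra. rewrite Rmult_comm.
  apply Rmult_le_compat_r. apply Rabs_pos. lra.
  unfold Gc. rewrite <- (sqrt_pow2 (Rabs _)) by apply Rabs_pos. apply sqrt_le_1_alt.
  rewrite pow2_abs.
  rewrite Rpow_mult_distr. apply (gstar_ge_x n f eta (fun k => c k t) (fun k => Derive (c k) t)).
Qed.

Lemma w_bound n f eta (c : nat -> R -> R) t j : (j <= n)%nat ->
  Rabs (Derive (c (S j)) t + acoef n f (fun k => c k t) j * Derive (c 0%nat) t) <= Gc n f eta c t.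
Proof.
  intro Hj. unfold Gc. rewrite <- (sqrt_pow2 (Rabs _)) by apply Rabs_pos. apply sqrt_le_1_alt.
  rewrite pow2_abs.
  eapply Rle_trans. 2: apply (gstar_ge_sum n f eta (fun k => c k t) (fun k => Derive (c k) t)).
  apply (term_le_sum (fun j => (Derive (c (S j)) t + acoef n f (fun k => c k t) j * Derive (c 0%nat) t)^2) n j).
  intro; apply pow2_ge_0. auto.
Qed.

Lemma acoef_bound n f p j K F : (forall i, Rabs (p (S i)) <= K) ->
  (forall j, Rabs (fcoef n f j (p 0%nat)) <= F) -> Rabs (acoef n f p j) <= 2 * K * F.
Proof.
  intros HK HF. assert (K0 : 0 <= K) by (specialize (HK 0%nat); pose proof (Rabs_pos (p 1%nat)); lra).
  assert (F0 : 0 <= F) by (specialize (HF 0%nat); pose proof (Rabs_pos (fcoef n f 0 (p 0%nat))); lra).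
  assert (Hv : Rabs (vprev p j) <= K).
  { destruct j; simpl. rewrite Rabs_R0; lra. apply HK. }
  assert (Hw : Rabs (vnext n p j) <= K).
  { unfold vnext. destruct (j + 1 <=? n)%nat. replace (j + 2)%nat with (S (S j)) by lia. apply HK.
    rewrite Rabs_R0; lra. }
  unfold acoef. unfold Rminus. eapply Rle_trans. apply Rabs_triang.
  rewrite Rabs_Ropp, !Rabs_mult.
  assert (Rabs (vprev p j) * Rabs (fcoef n f j (p 0%nat)) <= K * F).
  { apply Rmult_le_compat; auto; apply Rabs_pos. }
  assert (Rabs (vnext n p j) * Rabs (fcoef n f (S j) (p 0%nat)) <= K * F).
  { apply Rmult_le_compat; auto; apply Rabs_pos. }
  lra.
Qed.

Lemma single_bound (g : R -> R) a b : a <= b -> (forall x, continuous g x) ->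
  exists M, 0 <= M /\ forall x, a <= x <= b -> Rabs (g x) <= M.
Proof.
  intros Hab Hg.
  destruct (continuity_ab_maj (fun x => Rabs (g x)) a b Hab) as [Mx [HM _]].
  { intros c _. apply continuity_pt_filterlim. apply continuous_Rabs_comp. auto. }
  exists (Rabs (g Mx)). split. apply Rabs_pos. auto.
Qed.

Lemma compact_bound (g : nat -> R -> R) a b N : a <= b -> (forall j x, continuous (g j) x) ->
  exists F, 0 <= F /\ forall j, (j <= N)%nat -> forall x, a <= x <= b -> Rabs (g j x) <= F.
Proof.
  intros Hab Hg. induction N.
  - destruct (single_bound (g 0%nat) a b Hab (Hg 0%nat)) as [M [HM0 HM]].
    exists M. split; auto. intros j Hj. replace j with 0%nat by lia. auto.
  - destruct IHN as [F [F0 HF]].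
    destruct (single_bound (g (S N)) a b Hab (Hg (S N))) as [M [HM0 HM]].
    exists (Rmax F M). split. apply Rle_trans with F; auto; apply Rmax_l.
    intros j Hj x Hx. destruct (Nat.eq_dec j (S N)).
    + subst. apply Rle_trans with M; auto; apply Rmax_r.
    + apply Rle_trans with F. apply HF; auto; lia. apply Rmax_l.
Qed.

Lemma abs_deriv_bound (h g : R -> R) K : (forall t, ex_derive h t) -> (forall t, continuous g t) ->
  (forall t, 0 <= t <= 1 -> Rabs (Derive h t) <= K * g t) ->
  forall s, 0 <= s <= 1 -> Rabs (h s - h 0) <= K * RInt g 0 s.
Proof.
  intros Hh Hg Hb s Hs. apply Rabs_le. split.
  - assert (- h s - - h 0 <= K * RInt g 0 s).
    { apply (deriv_bound (fun t => - h t) (fun t => - Derive h t) g K); auto.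
      intro t. apply (is_derive_opp h). apply Derive_correct. auto.
      intros t Ht. specialize (Hb t Ht). apply Rabs_le_between in Hb. lra. }
    lra.
  - apply (deriv_bound h (Derive h) g K); auto.
    intro t. apply Derive_correct. auto.
    intros t Ht. specialize (Hb t Ht). apply Rabs_le_between in Hb. lra.
Qed.

Lemma RInt_sub01 (g : R -> R) s : (forall t, continuous g t) -> (forall t, 0 <= g t) -> 0 <= s <= 1 ->
  0 <= RInt g 0 s /\ RInt g 0 s <= RInt g 0 1.
Proof.
  intros Hg Hp Hs.
  assert (Ex : forall a b, ex_RInt g a b).
  { intros a b. apply (@ex_RInt_continuous R_CompleteNormedModule). intros; auto. }
  assert (0 <= RInt g 0 s) by (apply RInt_ge_0; auto; lra).
  assert (0 <= RInt g s 1) by (apply RInt_ge_0; auto; lra).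
  split; auto.
  rewrite <- (RInt_Chasles g 0 s 1) by auto. change (plus (RInt g 0 s) (RInt g s 1)) with (RInt g 0 s + RInt g s 1).
  lra.
Qed.

Lemma lower_region n f eta r
  (Hf : forall j x, continuous (fcoef n f j) x)
  (He : forall x u, continuous (fun p : R * R => eta (fst p) (snd p)) (x, u))
  (Hrc : forall u, continuous r u) (Hr : forall u, 0 < r u)
  (Hre : forall x u, r u <= eta x u) (R0 X0 : R) :
  exists C, 0 <= C /\ forall c p q, adm_curve n c p q -> Pn n p <= R0 -> Rabs (p 0%nat) <= X0 ->
    curve_length n f eta c <= 1 ->
    Pn n q <= Pn n p + curve_length n f eta c /\
    forall k, Rabs (q k - p k) <= C * curve_length n f eta c.
Proof.
  set (K := Rmax R0 0 + 1).
  assert (K1 : 1 <= K) by (unfold K; pose proof (Rmax_r R0 0); lra).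
  destruct (continuity_ab_min r (-K) K) as [mx [Hmx _]]. lra.
  { intros; apply continuity_pt_filterlim; apply Hrc. }
  set (m := r mx). assert (m0 : 0 < m) by apply Hr.
  set (X1 := Rabs X0 + 1 / m).
  assert (X1p : 0 <= X1). { unfold X1. pose proof (Rabs_pos X0). assert (0 < 1/m) by (apply Rdiv_lt_0_compat; lra). lra. }
  destruct (compact_bound (fcoef n f) (-X1) X1 n) as [F [F0 HF0]]. lra. auto.
  assert (HF : forall j x, -X1 <= x <= X1 -> Rabs (fcoef n f j x) <= F).
  { intros j x Hx. destruct (Compare_dec.le_lt_dec j n). auto. rewrite fcoef_big by lia. rewrite Rabs_R0; lra. }
  assert (Hm1 : 0 <= 1 / m) by (apply Rlt_le, Rdiv_lt_0_compat; lra).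
  assert (Hm2 : 0 <= 2 * K * F / m) by (apply Rmult_le_pos; [nra | apply Rlt_le, Rinv_0_lt_compat; lra]).
  exists (1/m + 1 + 2 * K * F / m). split. lra.
  intros c p q [Hman [Hd [H0 H1]]] HP HX HL.
  set (L := curve_length n f eta c). fold L in HL.
  set (g := Gc n f eta c).
  assert (gc : forall t, continuous g t) by (apply Gc_cont; auto).
  assert (gp : forall t, 0 <= g t) by (intro; apply Gc_nonneg).
  assert (Lg : forall s, 0 <= s <= 1 -> 0 <= RInt g 0 s /\ RInt g 0 s <= L).
  { intros s Hs. apply RInt_sub01; auto. }
  assert (L0 : 0 <= L) by (destruct (Lg 1 ltac:(lra)); lra).
  assert (Hexd : forall k t, ex_derive (c k) t) by (intros; apply Hd).
  assert (Hpa : forall s, 0 <= s <= 1 -> Pn n (fun k => c k s) <= Pn n p + L).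
  { intros s Hs.
    assert (Pn n (fun k => c k s) - Pn n (fun k => c k 0) <= 1 * RInt g 0 s).
    { apply (deriv_bound (fun t => Pn n (fun k => c k t))
        (fun t => sum_f_R0 (fun j => c (S j) t * Derive (c (S j)) t) n / Pn n (fun k => c k t)) g 1).
      intro t. apply Pn_deriv. auto. auto.
      intros t _. rewrite Rmult_1_l. apply P_bound_deriv. auto. }
    rewrite (Pn_ext n (fun k => c k 0) p) in H by auto.
    destruct (Lg s Hs). lra. }
  assert (Hu : forall t, 0 <= t <= 1 -> forall i, Rabs (c (S i) t) <= K).
  { intros t Ht i. eapply Rle_trans. apply (comp_le_Pn n (fun k => c k t)). apply Hman.
    specialize (Hpa t Ht). pose proof (Rmax_l R0 0). unfold K. lra. }
  assert (Hme : forall t, 0 <= t <= 1 -> m <= eta (c 0%nat t) (c 1%nat t)).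
  { intros t Ht. eapply Rle_trans. 2: apply Hre. apply Hmx. apply Rabs_le_between. apply (Hu t Ht 0%nat). }
  assert (Hxd : forall t, 0 <= t <= 1 -> Rabs (Derive (c 0%nat) t) <= 1 / m * g t).
  { intros t Ht. unfold Rdiv. rewrite Rmult_1_l, Rmult_comm. apply x_bound; auto. }
  assert (Hxs : forall s, 0 <= s <= 1 -> Rabs (c 0%nat s - p 0%nat) <= 1 / m * L).
  { intros s Hs. rewrite <- H0. eapply Rle_trans. apply (abs_deriv_bound (c 0%nat) g (1/m)); auto.
    apply Rmult_le_compat_l; auto. apply Lg; auto. }
  assert (Hx : forall t, 0 <= t <= 1 -> -X1 <= c 0%nat t <= X1).
  { intros t Ht. specialize (Hxs t Ht). apply Rabs_le_between. unfold X1.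
    assert (1 / m * L <= 1 / m) by (rewrite <- (Rmult_1_r (1/m)) at 2; apply Rmult_le_compat_l; auto).
    pose proof (Rabs_triang (c 0%nat t - p 0%nat) (p 0%nat)).
    replace (c 0%nat t - p 0%nat + p 0%nat) with (c 0%nat t) in H2 by ring.
    pose proof (Rle_abs X0). lra. }
  assert (Hvd : forall j, (j <= n)%nat -> forall t, 0 <= t <= 1 ->
            Rabs (Derive (c (S j)) t) <= (1 + 2 * K * F / m) * g t).
  { intros j Hj t Ht.
    pose proof (w_bound n f eta c t j Hj) as Hw. fold g in Hw.
    assert (Ha : Rabs (acoef n f (fun k => c k t) j) <= 2 * K * F).
    { apply acoef_bound. intro i; apply Hu; auto. intro j'. apply HF. apply Hx; auto. }
    pose proof (Hxd t Ht).
    replace (Derive (c (S j)) t) with ((Derive (c (S j)) t + acoef n f (fun k => c k t) j * Derive (c 0%nat) t)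
      - acoef n f (fun k => c k t) j * Derive (c 0%nat) t) by ring.
    unfold Rminus. eapply Rle_trans. apply Rabs_triang. rewrite Rabs_Ropp, Rabs_mult.
    assert (Rabs (acoef n f (fun k => c k t) j) * Rabs (Derive (c 0%nat) t) <= 2 * K * F * (1 / m * g t)).
    { apply Rmult_le_compat; auto; apply Rabs_pos. }
    assert (2 * K * F * (1 / m * g t) = 2 * K * F / m * g t) by (field; lra).
    lra. }
  split.
  { rewrite <- (Pn_ext n (fun k => c k 1) q) by auto. apply Hpa; lra. }
  intro k.
  assert (HC0 : 0 <= (1 + 2 * K * F / m) * L) by (apply Rmult_le_pos; lra).
  assert (HC1 : 0 <= 1 / m * L) by (apply Rmult_le_pos; lra).
  replace ((1/m + 1 + 2 * K * F / m) * L) with (1 / m * L + (1 + 2 * K * F / m) * L) by ring.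
  destruct k as [|j].
  - pose proof (Hxs 1 ltac:(lra)). rewrite H1 in H. lra.
  - rewrite <- H0, <- H1. destruct (Compare_dec.le_lt_dec j n) as [Hj|Hj].
    + assert (Rabs (c (S j) 1 - c (S j) 0) <= (1 + 2 * K * F / m) * RInt g 0 1).
      { apply (abs_deriv_bound (c (S j)) g). auto. auto. intros t Ht. apply Hvd; auto. lra. }
      assert ((1 + 2 * K * F / m) * RInt g 0 1 <= (1 + 2 * K * F / m) * L).
      { apply Rmult_le_compat_l. lra. apply Lg; lra. }
      lra.
    + rewrite (Hman 1 (S j)) by lia. rewrite (Hman 0 (S j)) by lia.
      rewrite Rminus_0_r, Rabs_R0. lra.
Qed.

Lemma glb_le (E : R -> Prop) L : E L -> Rbar_le (Glb_Rbar E) (Finite L).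
Proof. intro H. exact (proj1 (Glb_Rbar_correct E) L H). Qed.

Lemma glb_lt (E : R -> Prop) e : Rbar_lt (Glb_Rbar E) (Finite e) -> exists L, E L /\ L < e.
Proof.
  intro H. apply NNPP. intro Hn.
  assert (Hlb : is_lb_Rbar E (Finite e)).
  { intros x Hx. simpl. apply Rnot_lt_le. intro Hlt. apply Hn. exists x; auto. }
  pose proof (proj2 (Glb_Rbar_correct E) _ Hlb).
  apply (Rbar_lt_not_le _ _ H H0).
Qed.

Lemma sq_le (x y : R) : Rabs x <= y -> x^2 <= y^2.
Proof. intro H. rewrite <- pow2_abs. pose proof (Rabs_pos x). apply pow_incr. lra. Qed.

Lemma single_local (g : R -> R) x0 : continuous g x0 ->
  exists δ, 0 < δ /\ forall x, Rabs (x - x0) < δ -> Rabs (g x) <= Rabs (g x0) + 1.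
Proof.
  intro Hg. destruct (proj1 (filterlim_locally _ _) Hg (mkposreal 1 Rlt_0_1)) as [δ Hδ].
  exists δ. split. apply cond_pos. intros x Hx.
  assert (Hb : Rabs (g x - g x0) < 1) by exact (Hδ x Hx).
  pose proof (Rabs_triang (g x - g x0) (g x0)). replace (g x - g x0 + g x0) with (g x) in H by ring. lra.
Qed.

Lemma local_bound (g : nat -> R -> R) x0 N : (forall j, continuous (g j) x0) ->
  exists δ, 0 < δ /\ exists F, 0 <= F /\ forall j, (j <= N)%nat -> forall x, Rabs (x - x0) < δ -> Rabs (g j x) <= F.
Proof.
  intro Hg. induction N.
  - destruct (single_local (g 0%nat) x0 (Hg 0%nat)) as [δ [Hδ H]].
    exists δ. split; auto. exists (Rabs (g 0%nat x0) + 1). split. pose proof (Rabs_pos (g 0%nat x0)); lra.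
    intros j Hj. replace j with 0%nat by lia. auto.
  - destruct IHN as [δ [Hδ [F [F0 HF]]]].
    destruct (single_local (g (S N)) x0 (Hg (S N))) as [δ' [Hδ' H]].
    exists (Rmin δ δ'). split. apply Rmin_pos; auto.
    exists (Rmax F (Rabs (g (S N) x0) + 1)). split. apply Rle_trans with F; auto; apply Rmax_l.
    intros j Hj x Hx. pose proof (Rmin_l δ δ'). pose proof (Rmin_r δ δ').
    destruct (Nat.eq_dec j (S N)).
    + subst. apply Rle_trans with (Rabs (g (S N) x0) + 1). apply H; lra. apply Rmax_r.
    + apply Rle_trans with F. apply HF. lia. lra. apply Rmax_l.
Qed.

Lemma eta_local (eta : R -> R -> R) x0 u0 :
  continuous (fun p : R * R => eta (fst p) (snd p)) (x0, u0) ->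
  exists δ, 0 < δ /\ forall x u, Rabs (x - x0) < δ -> Rabs (u - u0) < δ -> eta x u <= Rabs (eta x0 u0) + 1.
Proof.
  intro He. destruct (proj1 (filterlim_locally _ _) He (mkposreal 1 Rlt_0_1)) as [δ Hδ].
  exists δ. split. apply cond_pos. intros x u Hx Hu.
  assert (Hb : Rabs (eta x u - eta x0 u0) < 1).
  { exact (Hδ (x, u) (conj Hx Hu)). }
  pose proof (Rle_abs (eta x u - eta x0 u0)). pose proof (Rle_abs (eta x0 u0)). lra.
Qed.

Lemma seg_adm n (p q : nat -> R) : in_manifold n p -> in_manifold n q ->
  adm_curve n (fun k t => p k + t * (q k - p k)) p q /\
  forall k t, Derive (fun t => p k + t * (q k - p k)) t = q k - p k.
Proof.
  intros Hp Hq.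
  assert (Hd : forall k t, is_derive (fun t => p k + t * (q k - p k)) t (q k - p k)).
  { intros k t. auto_derive. auto. ring. }
  assert (HD : forall k t, Derive (fun t => p k + t * (q k - p k)) t = q k - p k).
  { intros; apply is_derive_unique; auto. }
  split; auto. split; [|split; [|split]].
  - intros t k Hk. simpl. rewrite Hp, Hq by auto. ring.
  - intros k t. split. eexists; apply Hd.
    apply (continuous_ext (fun _ => q k - p k)). intros; rewrite HD; auto. apply continuous_const.
  - intro k. simpl. ring.
  - intro k. simpl. ring.
Qed.

Lemma upper n f eta
  (Hf : forall j x, continuous (fcoef n f j) x)
  (He : forall x u, continuous (fun p : R * R => eta (fst p) (snd p)) (x, u))
  (Hpos : forall x u, 0 < eta x u) q :
  in_manifold n q -> exists δ, 0 < δ /\ exists Q, 0 <= Q /\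
    forall p d, in_manifold n p -> 0 <= d <= δ -> (forall k, Rabs (p k - q k) <= d) ->
    Rbar_le (rdist n f eta p q) (Finite (d * Q)).
Proof.
  intro Hq.
  set (V := sum_f_R0 (fun k => Rabs (q k)) (S n)).
  assert (HV : forall k, Rabs (q k) <= V).
  { intro k. destruct (Compare_dec.le_lt_dec k (S n)).
    apply (term_le_sum (fun k => Rabs (q k))). intro; apply Rabs_pos. auto.
    rewrite Hq by lia. rewrite Rabs_R0. apply cond_pos_sum. intro; apply Rabs_pos. }
  assert (V0 : 0 <= V) by (specialize (HV 0%nat); pose proof (Rabs_pos (q 0%nat)); lra).
  destruct (eta_local eta (q 0%nat) (q 1%nat) (He _ _)) as [δ1 [Hδ1 HE]].
  set (E := Rabs (eta (q 0%nat) (q 1%nat)) + 1).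
  destruct (local_bound (fcoef n f) (q 0%nat) (S n)) as [δ2 [Hδ2 [F [F0 HF0]]]]. intro; auto.
  assert (HF : forall j x, Rabs (x - q 0%nat) < δ2 -> Rabs (fcoef n f j x) <= F).
  { intros j x Hx. destruct (Compare_dec.le_lt_dec j (S n)). auto. rewrite fcoef_big by lia. rewrite Rabs_R0; lra. }
  set (B := 1 + 2 * (V + 1) * F).
  set (Q := sqrt (E^2 + INR (S n) * B^2)).
  exists (Rmin (Rmin (δ1/2) (δ2/2)) 1). split.
  { apply Rmin_pos. apply Rmin_pos; lra. lra. }
  exists Q. split. apply sqrt_pos.
  intros p d Hp Hd Hpq.
  pose proof (Rmin_l (Rmin (δ1/2) (δ2/2)) 1). pose proof (Rmin_r (Rmin (δ1/2) (δ2/2)) 1).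
  pose proof (Rmin_l (δ1/2) (δ2/2)). pose proof (Rmin_r (δ1/2) (δ2/2)).
  destruct (seg_adm n p q Hp Hq) as [Hadm HD].
  set (c := fun k t => p k + t * (q k - p k)).
  eapply Rbar_le_trans. apply glb_le. exists c. split. exact Hadm. reflexivity.
  simpl. unfold curve_length.
  assert (Hex : ex_RInt (Gc n f eta c) 0 1).
  { apply (@ex_RInt_continuous R_CompleteNormedModule). intros. apply Gc_cont; auto. apply Hadm. }
  apply Rle_trans with (RInt (fun _ => d * Q) 0 1).
  2: { rewrite RInt_const. change (scal (1 - 0) (d * Q)) with ((1 - 0) * (d * Q)). lra. }
  apply RInt_le. lra. exact Hex. apply ex_RInt_const.
  intros t Ht. fold (Gc n f eta c t). unfold Gc.
  replace (fun k => Derive (c k) t) with (fun k => q k - p k) by (apply functional_extensionality; intro k; symmetry; apply HD).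
  set (pt := fun k => c k t).
  assert (Hc : forall k, Rabs (pt k - q k) <= d).
  { intro k. unfold pt, c. replace (p k + t * (q k - p k) - q k) with ((1 - t) * (p k - q k)) by ring.
    rewrite Rabs_mult, Rabs_right by lra. specialize (Hpq k). pose proof (Rabs_pos (p k - q k)). nra. }
  assert (Hb : forall k, Rabs (pt k) <= V + 1).
  { intro k. pose proof (Rabs_triang (pt k - q k) (q k)). replace (pt k - q k + q k) with (pt k) in H3 by ring.
    specialize (Hc k). specialize (HV k). lra. }
  assert (Heta : eta (pt 0%nat) (pt 1%nat) <= E).
  { apply HE. specialize (Hc 0%nat). lra. specialize (Hc 1%nat). lra. }
  assert (Ha : forall j, Rabs (acoef n f pt j) <= 2 * (V + 1) * F).
  { intro j. apply acoef_bound. intro; auto. intro j'. apply HF. specialize (Hc 0%nat). lra. }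
  unfold Q. rewrite <- (sqrt_pow2 d) by lra. rewrite <- sqrt_mult_alt by apply pow2_ge_0.
  apply sqrt_le_1_alt. rewrite gstar_eq.
  assert (T1 : (eta (pt 0%nat) (pt 1%nat))^2 * (q 0%nat - p 0%nat)^2 <= E^2 * d^2).
  { apply Rmult_le_compat. apply pow2_ge_0. apply pow2_ge_0.
    apply sq_le. rewrite Rabs_right. auto. apply Rle_ge, Rlt_le, Hpos.
    apply sq_le. rewrite Rabs_minus_sym. auto. }
  assert (T2 : sum_f_R0 (fun j => (q (S j) - p (S j) + acoef n f pt j * (q 0%nat - p 0%nat))^2) n
               <= sum_f_R0 (fun _ => d^2 * B^2) n).
  { apply sum_Rle. intros j _. rewrite <- Rpow_mult_distr. apply sq_le.
    eapply Rle_trans. apply Rabs_triang. rewrite Rabs_mult.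
    pose proof (Hpq (S j)). pose proof (Hpq 0%nat). rewrite Rabs_minus_sym in H3, H4.
    assert (Rabs (acoef n f pt j) * Rabs (q 0%nat - p 0%nat) <= 2 * (V + 1) * F * d).
    { apply Rmult_le_compat; auto; apply Rabs_pos. }
    unfold B. lra. }
  rewrite sum_cte in T2. nra.
Qed.

Lemma finite_cv (u : nat -> nat -> R) (l : nat -> R) M :
  (forall i, Un_cv (fun m => u m i) (l i)) -> forall e, 0 < e ->
  exists N, forall m, (N <= m)%nat -> forall i, (i <= M)%nat -> Rabs (u m i - l i) < e.
Proof.
  intros Hc e He. induction M.
  - destruct (Hc 0%nat e He) as [N HN]. exists N. intros m Hm i Hi. replace i with 0%nat by lia.
    apply HN. lia.
  - destruct IHM as [N HN]. destruct (Hc (S M) e He) as [N' HN'].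
    exists (Nat.max N N'). intros m Hm i Hi. destruct (Nat.eq_dec i (S M)).
    + subst. apply HN'. lia.
    + apply HN. lia. lia.
Qed.

Theorem lemma3p2 (n : nat) (f : nat -> R -> R) (eta : R -> R -> R) (r : R -> R) :
  (forall j : nat, (1 <= j <= n)%nat -> smooth1 (f j)) ->
  smooth2 eta ->
  (forall x u : R, 0 < eta x u) ->
  (forall u : R, continuous r u) ->
  (forall u : R, 0 < r u) ->
  (forall x u : R, r u <= eta x u) ->
  riem_complete n f eta.
Proof.
  intros Hf1 He2 Hpos Hrc Hr Hre.
  pose proof (fcoef_cont n f Hf1) as Hf.
  assert (He : forall x u, continuous (fun p : R * R => eta (fst p) (snd p)) (x, u)).
  { intros x u. exact (proj1 (He2 nil x u)). }
  intros s Hs Hcau.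
  destruct (Hcau 1 Rlt_0_1) as [N0 HN0].
  set (p0 := s N0).
  destruct (lower_region n f eta r Hf He Hrc Hr Hre (Pn n p0) (Rabs (p0 0%nat))) as [C0 [C00 HC0]].
  assert (Hreg : forall m, (N0 <= m)%nat -> Pn n (s m) <= Pn n p0 + 1 /\ Rabs (s m 0%nat) <= Rabs (p0 0%nat) + C0).
  { intros m Hm. destruct (glb_lt _ _ (HN0 N0 m (le_n _) Hm)) as [L [[c [Hc HL]] HL1]].
    destruct (HC0 c p0 (s m) Hc (Rle_refl _) (Rle_refl _) ltac:(lra)) as [Ha Hb].
    rewrite <- HL in Ha, Hb. split. lra.
    specialize (Hb 0%nat). assert (C0 * L <= C0) by (rewrite <- (Rmult_1_r C0) at 2; apply Rmult_le_compat_l; lra).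
    pose proof (Rabs_triang (s m 0%nat - p0 0%nat) (p0 0%nat)).
    replace (s m 0%nat - p0 0%nat + p0 0%nat) with (s m 0%nat) in H0 by ring. lra. }
  destruct (lower_region n f eta r Hf He Hrc Hr Hre (Pn n p0 + 1) (Rabs (p0 0%nat) + C0)) as [C1 [C10 HC1]].
  assert (Key : forall e, 0 < e -> exists N, forall m k, (N <= m)%nat -> (N <= k)%nat ->
             forall i, Rabs (s k i - s m i) < e).
  { intros e He0. set (e' := Rmin 1 (e / (C1 + 1))).
    assert (e'0 : 0 < e') by (apply Rmin_pos; [lra | apply Rdiv_lt_0_compat; lra]).
    destruct (Hcau e' e'0) as [N' HN'].
    exists (Nat.max N0 N'). intros m k Hm Hk i.
    destruct (glb_lt _ _ (HN' m k ltac:(lia) ltac:(lia))) as [L [[c [Hc HL]] HL1]].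
    destruct (Hreg m ltac:(lia)) as [R1 R2].
    assert (e' <= 1) by apply Rmin_l. assert (e' <= e / (C1 + 1)) by apply Rmin_r.
    destruct (HC1 c (s m) (s k) Hc R1 R2 ltac:(rewrite <- HL; lra)) as [_ Hb].
    rewrite <- HL in Hb. specialize (Hb i).
    assert (C1 * L <= C1 * (e / (C1 + 1))) by (apply Rmult_le_compat_l; lra).
    assert (C1 * (e / (C1 + 1)) < e).
    { apply (Rmult_lt_reg_r (C1 + 1)). lra. field_simplify; lra. }
    lra. }
  assert (Hcc : forall i, Cauchy_crit (fun m => s m i)).
  { intros i e He0. destruct (Key e He0) as [N HN]. exists N. intros a b Ha Hb.
    unfold Rdist. apply HN; lia. }
  set (q := fun i => if (i <=? n + 1)%nat then proj1_sig (Rcomplete.R_complete _ (Hcc i)) else 0).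
  assert (Hq : in_manifold n q).
  { intros k Hk. unfold q. rewrite (proj2 (Nat.leb_gt k (n + 1))) by lia. reflexivity. }
  assert (Hcv : forall i, Un_cv (fun m => s m i) (q i)).
  { intro i. unfold q. destruct (i <=? n + 1)%nat eqn:Ei.
    - apply proj2_sig.
    - apply Nat.leb_gt in Ei. intros e He0. exists 0%nat. intros m _. unfold Rdist.
      rewrite Hs by lia. rewrite Rminus_0_r, Rabs_R0. lra. }
  exists q. split. exact Hq.
  intros e He0.
  destruct (upper n f eta Hf He Hpos q Hq) as [δ [Hδ [Q [Q0 HQ]]]].
  set (d := Rmin δ (e / (2 * (Q + 1)))).
  assert (d0 : 0 < d) by (apply Rmin_pos; [lra | apply Rdiv_lt_0_compat; lra]).
  assert (d <= δ) by apply Rmin_l. assert (d <= e / (2 * (Q + 1))) by apply Rmin_r.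
  destruct (finite_cv s q (n + 1) Hcv d d0) as [N HN].
  exists N. intros m Hm.
  eapply Rbar_le_lt_trans. apply (HQ (s m) d (Hs m)). split; lra.
  { intro k. destruct (Compare_dec.le_lt_dec k (n + 1)).
    - left. apply HN; auto.
    - rewrite Hs by lia. rewrite Hq by lia. rewrite Rminus_0_r, Rabs_R0. lra. }
  simpl. assert (d * Q <= e / (2 * (Q + 1)) * Q) by (apply Rmult_le_compat_r; lra).
  assert (e / (2 * (Q + 1)) * Q < e).
  { apply (Rmult_lt_reg_r (2 * (Q + 1))). lra. field_simplify; nra. }
  lra.
Qed.
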